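(* Let $L$ be a right Leibniz algebra and $I$ an ideal of $L$. (1) If $\mathrm{Ann}_L(I)=\{0\}$ (respectively $\mathrm{ran}_L(I)=\{0\}$), then $I$ is essential. (2) If $L$ is semiprime, then $I\cap\mathrm{Ann}_L(I)=\{0\}$ (respectively $I\cap\mathrm{ran}_L(I)=\{0\}$), and $I$ is essential if and only if $\mathrm{Ann}_L(I)=\{0\}$ (respectively if and only if $\mathrm{ran}_L(I)=\{0\}$).
   Context: A right Leibniz algebra satisfies $[x,[y,z]]=[[x,y],z]-[[x,z],y]$. Ideals: subspaces $I$ with $[I,L]\subseteq I$, $[L,I]\subseteq I$. $L$ is semiprime if $[J,J]\ne\{0\}$ for every nonzero ideal $J$. For $H\subseteq L$: $\mathrm{lan}_L(H)=\{x\in L:[x,y]=0\ \forall y\in H\}$, $\mathrm{ran}_L(H)=\{x\in L:[y,x]=0\ \forall y\in H\}$, $\mathrm{Ann}_L(H)=\mathrm{lan}_L(H)\cap\mathrm{ran}_L(H)$. An ideal $I$ is essential if $I\cap J\ne\{0\}$ for every nonzero ideal $J$ of $L$. *)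

(* Defs.v *)
From HB Require Import structures.
From mathcomp Require Import all_boot all_algebra.
Set Implicit Arguments. Unset Strict Implicit. Unset Printing Implicit Defensive.
Import GRing.Theory.
Local Open Scope ring_scope.

(* An algebra over a field K: a K-vector space V (arbitrary dimension)
   with a bracket br : V -> V -> V.  Subsets of V are predicates V -> Prop. *)

Definition bilinear_br (K : fieldType) (V : lmodType K) (br : V -> V -> V) : Prop :=
  (forall (a : K) (x y z : V), br (a *: x + y) z = a *: br x z + br y z) /\
  (forall (a : K) (x y z : V), br z (a *: x + y) = a *: br z x + br z y).

Definition right_leibniz (K : fieldType) (V : lmodType K) (br : V -> V -> V) : Prop :=
  bilinear_br br /\
  forall x y z : V, br x (br y z) = br (br x y) z - br (br x z) y.

Definition subspace (K : fieldType) (V : lmodType K) (S : V -> Prop) : Prop :=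
  S 0 /\ forall (a : K) (x y : V), S x -> S y -> S (a *: x + y).

Definition ideal (K : fieldType) (V : lmodType K) (br : V -> V -> V) (I : V -> Prop) : Prop :=
  subspace I /\ (forall x y : V, I x -> I (br x y) /\ I (br y x)).

(* S = {0} (for a subset containing 0) *)
Definition is_zero (K : fieldType) (V : lmodType K) (S : V -> Prop) : Prop :=
  forall x, S x -> x = 0.

Definition inter (T : Type) (A B : T -> Prop) : T -> Prop := fun x => A x /\ B x.

Definition lan (K : fieldType) (V : lmodType K) (br : V -> V -> V) (H : V -> Prop) : V -> Prop :=
  fun x => forall y, H y -> br x y = 0.
Definition ran (K : fieldType) (V : lmodType K) (br : V -> V -> V) (H : V -> Prop) : V -> Prop :=
  fun x => forall y, H y -> br y x = 0.
Definition Ann (K : fieldType) (V : lmodType K) (br : V -> V -> V) (H : V -> Prop) : V -> Prop :=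
  inter (lan br H) (ran br H).

Definition semiprime (K : fieldType) (V : lmodType K) (br : V -> V -> V) : Prop :=
  forall J, ideal br J -> ~ is_zero J ->
    ~ (forall x y, J x -> J y -> br x y = 0).

Definition essential (K : fieldType) (V : lmodType K) (br : V -> V -> V) (I : V -> Prop) : Prop :=
  forall J, ideal br J -> ~ is_zero J -> ~ is_zero (inter I J).

(* Main.v *)
Require Import Defs.
From mathcomp Require Import all_boot all_algebra.
From Stdlib Require Import Classical.
Import GRing.Theory.
Local Open Scope ring_scope.
Set Implicit Arguments.

Section S.
Variables (K : fieldType) (V : lmodType K) (br : V -> V -> V).
Hypothesis HL : right_leibniz br.

Lemma br0l z : br 0 z = 0.
Proof.
have e := (proj1 (proj1 HL)) 1 0 0 z.
rewrite scaler0 addr0 scale1r in e.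
by apply: (@addrI _ (br 0 z)); rewrite addr0 -e.
Qed.

Lemma br0r z : br z 0 = 0.
Proof.
have e := (proj2 (proj1 HL)) 1 0 0 z.
rewrite scaler0 addr0 scale1r in e.
by apply: (@addrI _ (br z 0)); rewrite addr0 -e.
Qed.

Lemma ran_ideal I : ideal br I -> ideal br (ran br I).
Proof.
move=> [_ HI]; split.
  split; first by move=> y _; rewrite br0r.
  move=> a x y Hx Hy i Ii; rewrite (proj2 (proj1 HL)) Hx // Hy // scaler0 addr0 //.
move=> x y Hx; split => i Ii.
  rewrite (proj2 HL) Hx // br0l (Hx (br i y)) ?subrr //; exact: (proj1 (HI _ y Ii)).
rewrite (proj2 HL) (Hx (br i y)) ?(Hx i) // ?br0l ?subrr //; exact: (proj1 (HI _ y Ii)).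
Qed.

Lemma Ann_ideal I : ideal br I -> ideal br (Ann br I).
Proof.
move=> HI; have [[_ Hs] Hr] := ran_ideal HI; have [_ HI'] := HI.
split.
  split; first by split; [move=> y _; rewrite br0l | move=> y _; rewrite br0r].
  move=> a x y [Hx1 Hx2] [Hy1 Hy2]; split; last exact: Hs.
  move=> i Ii; rewrite (proj1 (proj1 HL)) Hx1 // Hy1 // scaler0 addr0 //.
move=> x y [Hx1 Hx2]; have [Ha Hb] := Hr x y Hx2.
split; split => // i Ii.
- have e := (proj2 HL) x y i.
  have Iyi : I (br y i) by exact: (proj2 (HI' i y Ii)).
  rewrite (Hx1 i Ii) (Hx1 _ Iyi) br0l subr0 in e; by rewrite -e.
- have e := (proj2 HL) y x i.
  have Iyi : I (br y i) by exact: (proj2 (HI' i y Ii)).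
  rewrite (Hx1 i Ii) (Hx2 _ Iyi) br0r subr0 in e; by rewrite -e.
Qed.

Lemma inter_ideal A B : ideal br A -> ideal br B -> ideal br (inter A B).
Proof.
move=> [[A0 As] Ab] [[B0 Bs] Bb]; split; first split.
- by split.
- by move=> a x y [? ?] [? ?]; split; auto.
- move=> x y [Ax Bx]; have [? ?] := Ab x y Ax; have [? ?] := Bb x y Bx.
  by split; split.
Qed.

Lemma ess_gen I (A : V -> Prop) : ideal br I ->
  (forall J, ideal br J -> is_zero (inter I J) -> forall x, J x -> A x) ->
  is_zero A -> essential br I.
Proof.
move=> HI H HA J HJ nJ zIJ; apply: nJ => x Jx; apply: HA; exact: (H J HJ zIJ).
Qed.

End S.

Theorem proposition2p8 (K : fieldType) (V : lmodType K) (br : V -> V -> V)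
  (I : V -> Prop) :
  right_leibniz br -> ideal br I ->
  ((is_zero (Ann br I) -> essential br I) /\
   (is_zero (ran br I) -> essential br I)) /\
  (semiprime br ->
     is_zero (inter I (Ann br I)) /\ is_zero (inter I (ran br I)) /\
     (essential br I <-> is_zero (Ann br I)) /\
     (essential br I <-> is_zero (ran br I))).
Proof.
move=> HL HI; have [_ HIb] := HI.
have ranJ : forall J, ideal br J -> is_zero (inter I J) -> forall x, J x -> ran br I x.
  move=> J [_ HJ] z x Jx i Ii; apply: z; split.
    exact: (proj1 (HIb i x Ii)).
  exact: (proj2 (HJ x i Jx)).
have AnnJ : forall J, ideal br J -> is_zero (inter I J) -> forall x, J x -> Ann br I x.
  move=> J HJ z x Jx; split; last exact: (ranJ J HJ z x Jx).
  move: HJ => [_ HJ] i Ii; apply: z; split.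
    exact: (proj2 (HIb i x Ii)).
  exact: (proj1 (HJ x i Jx)).
have e1 : is_zero (Ann br I) -> essential br I := ess_gen HI (AnnJ).
have e2 : is_zero (ran br I) -> essential br I := ess_gen HI (ranJ).
split; first by split.
move=> Hsp.
have zA : is_zero (inter I (Ann br I)).
  apply: NNPP => nz; apply: (Hsp _ (inter_ideal HI (Ann_ideal HL HI)) nz).
  by move=> x y [Ix [Hx1 Hx2]] [Iy _]; apply: Hx1.
have zR : is_zero (inter I (ran br I)).
  apply: NNPP => nz; apply: (Hsp _ (inter_ideal HI (ran_ideal HL HI)) nz).
  by move=> x y [Ix _] [Iy Hy]; apply: Hy.
split => //; split => //; split; split => // Hess.
- apply: NNPP => nz; exact: (Hess _ (Ann_ideal HL HI) nz zA).
- apply: NNPP => nz; exact: (Hess _ (ran_ideal HL HI) nz zR).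
Qed.
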